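(* Let $\beta_1,\dots,\beta_d$, $\bar{\mu}$, $\lambda$ and $R_n$ be as in the context, and assume $\lambda<\frac{4}{|\beta_1\cdots\beta_d|}$. Then $\bar{\mu}(R_n)$ grows exponentially in $n$, i.e. there exist $c>0$ and $\rho>1$ such that $\bar{\mu}(R_n)\ge c\rho^n$ for all $n\in\mathbb{N}$.
   Context: Let $\beta\in(1,2)$ be an algebraic integer none of whose Galois conjugates has modulus $1$. List all its Galois conjugates (both members of each complex-conjugate pair) as $\beta=\beta_1,\dots,\beta_d,\beta_{d+1},\dots,\beta_{d+s},\beta_{d+s+1}$, where $|\beta_1|,\dots,|\beta_d|>1$, $|\beta_{d+1}|,\dots,|\beta_{d+s}|<1$, and $\beta_{d+s+1}$ is real with $|\beta_{d+s+1}|>1$. For $z\in\mathbb{C}$ let $\mathbb{F}_z=\mathbb{R}$ if $z\in\mathbb{R}$ and $\mathbb{C}$ otherwise; let $\bar{\mathbb{K}}=\prod_{j=1}^{d+s+1}\mathbb{F}_{\beta_j}$ and $\bar{\beta}^n=(\beta_1^n,\dots,\beta_{d+s+1}^n)$. Let $\pi_e(x)=(x_1,\dots,x_d)$ and $\pi_{free}(x)=x_{d+s+1}$. For $j\le d$ let $I_{\beta_j}=[-\frac{1}{\beta_j-1},\frac{1}{\beta_j-1}]$ if $\beta_j>1$, $I_{\beta_j}=\{x\in\mathbb{R}:|x|\le\frac{2}{|\beta_j|-1}\}$ if $\beta_j<-1$, $I_{\beta_j}=\{z\in\mathbb{C}:|z|\le\frac{2}{|\beta_j|-1}\}$ if $\beta_j\notin\mathbb{R}$;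 $I=\prod_{j\le d}I_{\beta_j}$ and $S=\{x\in\bar{\mathbb{K}}:\pi_e(x)\in I\}$. Let $\bar{X}=\{\sum_{i=1}^n a_i\bar{\beta}^{n-i}:n\in\mathbb{N},a_i\in\{-1,0,1\}\}\cap S$. For $n\ge1$ and $x\in S$ let $\bar{\mu}_n(\{x\})=\#\{(a,b)\in\{0,1\}^n\times\{0,1\}^n:\sum_{i=1}^n(a_i-b_i)\bar{\beta}^{n-i}=x\}$. It is known (from earlier work of the authors) that there exist $\lambda>1$ and $f:\bar{X}\to(0,\infty)$ with $\lambda^{-n}\bar{\mu}_n(\{x\})\to f(x)$ for every $x\in\bar{X}$, and that $0<f(x)\le f(0)$; let $\bar{\mu}=\sum_{x\in\bar{X}}f(x)\delta_x$. For $n\ge0$ let $R_n=\{x\in\bar{X}:|\pi_{free}(x)|\le\sum_{i=0}^{n-1}|\beta_{d+s+1}|^i\}$. *)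

(* Defs.v *)
From mathcomp Require Import all_boot all_order all_algebra.
From mathcomp Require Import complex.
From mathcomp Require Import all_classical all_reals all_analysis.
Set Implicit Arguments. Unset Strict Implicit. Unset Printing Implicit Defensive.
Import Order.TTheory GRing.Theory Num.Theory.
Local Open Scope ring_scope.

Section Defs.
Variable R : realType.
(* number of conjugates: N = d + s + 1 *)
Definition cabs (z : R[i]) : R := complex.Re `|z|.

Variables (N : nat) (b : 'I_N -> R[i]).

(* points of \bar K, coordinatewise embedding; coordinate j corresponds to beta_j *)
Definition Kpt := {ffun 'I_N -> R[i]}.

Definition digit_vec (a : seq int) : Kpt :=
  [ffun j => \sum_(k < size a) (a`_k)%:~R * b j ^+ (size a - k.+1)].

(* radius of I_{beta_j} for an expanding conjugate beta_j *)
Definition Ibound (z : R[i]) : R :=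
  if complex.Im z == 0 then
    (if 1 < complex.Re z then (complex.Re z - 1)^-1 else 2 / (`|complex.Re z| - 1))
  else 2 / (cabs z - 1).

(* S = { x : pi_e(x) \in I } ; the expanding coordinates are those j < d *)
Definition inS (d : nat) (x : Kpt) : Prop :=
  forall j : 'I_N, (j < d)%N -> cabs (x j) <= Ibound (b j).

Definition inX (d : nat) (x : Kpt) : Prop :=
  (exists a : seq int, all (fun t => t \in [:: -1; 0; 1]) a /\ digit_vec a = x)
  /\ inS d x.

Definition mu (n : nat) (x : Kpt) : nat :=
  #|[set p : n.-tuple bool * n.-tuple bool |
      digit_vec [seq (nat_of_bool t.1)%:Z - (nat_of_bool t.2)%:Z | t <- zip p.1 p.2]
      == x]|.

Definition Rset (d : nat) (fr : 'I_N) (n : nat) : set Kpt :=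
  [set x | inX d x /\ cabs (x fr) <= \sum_(k < n) cabs (b fr) ^+ k].

End Defs.

(* Main.v *)
Require Import Defs.
From mathcomp Require Import all_boot all_order all_algebra.
From mathcomp Require Import complex.
From mathcomp Require Import all_classical all_reals all_analysis.
From mathcomp Require Import ring lra zify.
Import Order.TTheory GRing.Theory Num.Theory.
Set Implicit Arguments. Unset Strict Implicit. Unset Printing Implicit Defensive.
Import numFieldNormedType.Exports.
Local Open Scope ring_scope.

Section Cabs.
Variable R : realType.
Implicit Types z w : R[i].

Lemma cabsE z : `|z| = (cabs z)%:C%C.
Proof. by rewrite /cabs normc_def. Qed.

Lemma cabs_def z : cabs z = Num.sqrt (complex.Re z ^+ 2 + complex.Im z ^+ 2).
Proof. by rewrite /cabs normc_def. Qed.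

Lemma cabs_ge0 z : 0 <= cabs z.
Proof. by rewrite cabs_def sqrtr_ge0. Qed.

Lemma cabsD z w : cabs (z + w) <= cabs z + cabs w.
Proof. by have := ler_normD z w; rewrite !cabsE -rmorphD lecR. Qed.

Lemma cabsM z w : cabs (z * w) = cabs z * cabs w.
Proof. by have := normrM z w; rewrite !cabsE -rmorphM => -[]. Qed.

Lemma cabsN z : cabs (- z) = cabs z.
Proof. by have := normrN z; rewrite !cabsE => -[]. Qed.

Lemma cabsX z n : cabs (z ^+ n) = cabs z ^+ n.
Proof. by have := normrX n z; rewrite !cabsE -rmorphXn => -[]. Qed.

Lemma cabs_prod (I : finType) (P : pred I) (F : I -> R[i]) :
  cabs (\prod_(i | P i) F i) = \prod_(i | P i) cabs (F i).
Proof. by apply: (big_morph _ cabsM); rewrite /cabs normr1. Qed.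

Lemma cabs_sum (I : Type) (r : seq I) (F : I -> R[i]) :
  cabs (\sum_(i <- r) F i) <= \sum_(i <- r) cabs (F i).
Proof.
elim: r => [|x r IH]; first by rewrite !big_nil /cabs normr0.
rewrite !big_cons; apply: le_trans (cabsD _ _) _; exact: lerD.
Qed.

Lemma cabs_real (x : R) : cabs (x%:C)%C = `|x|.
Proof. by rewrite cabs_def /= expr0n /= addr0 sqrtr_sqr. Qed.

Lemma cabs_int (k : int) : cabs (k%:~R : R[i]) = `|k|%:~R.
Proof.
have -> : (k%:~R : R[i]) = ((k%:~R : R)%:C)%C by rewrite rmorph_int.
by rewrite cabs_real -intr_norm.
Qed.

Lemma cabs_Re z : `|complex.Re z| <= cabs z.
Proof. by have := normc_ge_Re z; rewrite cabsE lecR. Qed.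

Lemma cabs_Im z : `|complex.Im z| <= cabs z.
Proof. by rewrite cabs_def -sqrtr_sqr ler_wsqrtr // lerDr sqr_ge0. Qed.

Lemma cabs_ReIm z : cabs z <= `|complex.Re z| + `|complex.Im z|.
Proof.
rewrite cabs_def.
set a := complex.Re z; set c := complex.Im z.
have h : a ^+ 2 + c ^+ 2 <= (`|a| + `|c|) ^+ 2.
  rewrite sqrrD -[a ^+ 2]real_normK ?num_real // -[c ^+ 2]real_normK ?num_real //.
  rewrite -addrA lerD2l lerDr; apply: mulrn_wge0; exact: mulr_ge0.
have := ler_wsqrtr h; rewrite sqrtr_sqr ger0_norm //; exact: addr_ge0.
Qed.

Lemma cabs_conj z : cabs (z^*)%C = cabs z.
Proof. by have := normcJ z; rewrite !cabsE => -[]. Qed.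

End Cabs.

Section Ev.
Variable R : realType.
Implicit Types z w : R[i].

Definition ev (s : seq int) (z : R[i]) : R[i] :=
  \sum_(k < size s) (s`_k)%:~R * z ^+ (size s - k.+1).

Lemma digit_vecE N (b : 'I_N -> R[i]) s j : digit_vec b s j = ev s (b j).
Proof. by rewrite /digit_vec ffunE. Qed.

Lemma ev_nil z : ev [::] z = 0.
Proof. by rewrite /ev big_ord0. Qed.

Lemma ev_cat s t z : ev (s ++ t) z = ev s z * z ^+ size t + ev t z.
Proof.
rewrite /ev size_cat big_split_ord /= mulr_suml; congr (_ + _).
  apply: eq_bigr => k _ /=; rewrite nth_cat ltn_ord -mulrA -exprD; congr (_ * _ ^+ _).
  have := ltn_ord k; lia.
apply: eq_bigr => k _ /=; rewrite nth_cat ltnNge leq_addr /= addKn; congr (_ * _ ^+ _).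
lia.
Qed.

Lemma ev_conj s z : ev s (z^*)%C = ((ev s z)^*)%C.
Proof.
rewrite /ev rmorph_sum; apply: eq_bigr => k _.
by rewrite rmorphM rmorphXn rmorph_int.
Qed.

Lemma ev_size s n z : size s = n ->
  ev s z = \sum_(k < n) (s`_k)%:~R * z ^+ (n - k.+1).
Proof. by move=> <-. Qed.

Lemma cabs_ev s z : all (fun t => `|t| <= 1) s ->
  cabs (ev s z) <= \sum_(k < size s) cabs z ^+ k.
Proof.
move=> /allP hs; rewrite /ev; apply: le_trans; first exact: cabs_sum.
rewrite [X in _ <= X](reindex_inj rev_ord_inj) /=.
apply: ler_sum => k _; rewrite cabsM cabsX cabs_int.
rewrite -[X in _ <= X]mul1r ler_wpM2r ?exprn_ge0 ?cabs_ge0 //.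
have [kl|kl] := ltnP k (size s); last by rewrite nth_default // normr0.
have := hs _ (mem_nth 0 kl); rewrite -(ler_int R) => /le_trans; apply.
by [].
Qed.

End Ev.

Section Dseq.
Variable R : realType.

Definition dseq n (P : n.-tuple bool * n.-tuple bool) : seq int :=
  [seq (nat_of_bool t.1)%:Z - (nat_of_bool t.2)%:Z | t <- zip P.1 P.2].

Lemma size_dseq n (P : n.-tuple bool * n.-tuple bool) : size (dseq P) = n.
Proof. by rewrite size_map size_zip !size_tuple minnn. Qed.

Lemma dseq_all n (P : n.-tuple bool * n.-tuple bool) :
  all (fun t => t \in [:: -1; 0; 1]) (dseq P).
Proof.
apply/allP => t /mapP [[u v] _ ->]; by case: u; case: v.
Qed.

Lemma dseq_all1 n (P : n.-tuple bool * n.-tuple bool) :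
  all (fun t => `|t| <= 1) (dseq P).
Proof.
apply/allP => t /mapP [[u v] _ ->]; by case: u; case: v.
Qed.

Lemma dseq_cat m n (Q : m.-tuple bool * m.-tuple bool) (P : n.-tuple bool * n.-tuple bool) :
  dseq (cat_tuple Q.1 P.1, cat_tuple Q.2 P.2) = dseq Q ++ dseq P.
Proof. by rewrite /dseq /= zip_cat ?size_tuple // map_cat. Qed.

Definition evb n (a : n.-tuple bool) (z : R[i]) : R[i] :=
  \sum_(k < n) (nat_of_bool (tnth a k))%:R * z ^+ (n - k.+1).

Lemma ev_dseq n (P : n.-tuple bool * n.-tuple bool) z :
  ev (dseq P) z = evb P.1 z - evb P.2 z.
Proof.
rewrite (ev_size _ (size_dseq P)) /evb -sumrB; apply: eq_bigr => k _.
rewrite -mulrBl; congr (_ * _).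
rewrite /dseq (nth_map (false, false)) ?size_zip ?size_tuple ?minnn //.
rewrite nth_zip ?size_tuple // /= !(tnth_nth false).
by rewrite rmorphB /= !pmulrn.
Qed.

End Dseq.
Lemma pt (R : realFieldType) (a c : R) : (a - c) ^+ 2 = a ^+ 2 + c ^+ 2 - (a * c) *+ 2.
Proof. ring. Qed.
Lemma cs_sum (R : realFieldType) (U : finType) (A : pred U) (x : U -> R) :
  (\sum_(u in A) x u) ^+ 2 <= #|A|%:R * \sum_(u in A) x u ^+ 2.
Proof.
have h : 0 <= \sum_(u in A) \sum_(v in A) (x u - x v) ^+ 2.
  by apply: sumr_ge0 => u _; apply: sumr_ge0 => v _; exact: sqr_ge0.
set S := \sum_(i in A) x i; set S2 := \sum_(i in A) x i ^+ 2.
have e : \sum_(u in A) \sum_(v in A) (x u - x v) ^+ 2 =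
   #|A|%:R * S2 *+ 2 - S ^+ 2 *+ 2.
  under eq_bigr => u _ do under eq_bigr => v _ do rewrite pt.
  under eq_bigr => u _ do rewrite sumrB big_split /= sumr_const.
  have e1 : forall u, \sum_(i in A) x u * x i *+ 2 = (x u * S) *+ 2.
    by move=> u; rewrite sumrMnl mulr_sumr.
  under eq_bigr => u _ do rewrite e1.
  rewrite sumrB big_split /= sumr_const.
  have -> : \sum_(i in A) (x i * S) *+ 2 = (S * S) *+ 2.
    by rewrite sumrMnl -mulr_suml.
  rewrite sumrMnl -/S2 -[S2 *+ #|A|]mulr_natr -/S2.
  rewrite !mulr2n. ring.
rewrite e subr_ge0 in h.
by rewrite -(ler_pMn2r (n:=2)) // mulrnAl.
Qed.

Lemma cs_count (T U : finType) (g : T -> U) (A : pred U) :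
  (forall t, g t \in A) ->
  (#|T| ^ 2 <= #|A| * #|[set p : T * T | g p.1 == g p.2]%SET|)%N.
Proof.
move=> gA.
pose c u := #|[set t | g t == u]|.
have e1 : #|T| = (\sum_(u in A) c u)%N.
  rewrite -sum1_card (partition_big g (fun u => u \in A)) //=.
  by apply: eq_bigr => u _; rewrite /c -sum1_card; apply: eq_bigl => t; rewrite inE.
have e2 : #|[set p : T * T | g p.1 == g p.2]%SET| = (\sum_(u in A) c u ^ 2)%N.
  rewrite -sum1_card (partition_big (fun p : T * T => g p.1) (fun u => u \in A)) //=.
  apply: eq_bigr => u _; rewrite /c expnS expn1 -cardsX -sum1_card; apply: eq_bigl => -[t1 t2].
  rewrite !inE /=; apply/andP/andP => [[/eqP -> /eqP ->]|[/eqP -> /eqP ->]] //.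
have := cs_sum A (fun u => (c u)%:R : rat).
rewrite e1 e2 => h.
rewrite -(ler_nat rat) natrM natrX !natr_sum.
by rewrite [X in _ * X](eq_bigr (fun i => (c i)%:R ^+ 2)) // => i _; rewrite natrX.
Qed.
Section Mu.
Variables (R : realType) (N : nat) (b : 'I_N -> R[i]).

Lemma muE n x : mu b n x = #|[set P : n.-tuple bool * n.-tuple bool | digit_vec b (dseq P) == x]%SET|.
Proof. by []. Qed.

Lemma cat_tuple_inj m n (s1 s2 : m.-tuple bool) (t1 t2 : n.-tuple bool) :
  val s1 ++ val t1 = val s2 ++ val t2 -> s1 = s2 /\ t1 = t2.
Proof.
move=> e; split; apply: val_inj.
  by have := congr1 (take m) e; rewrite !take_size_cat ?size_tuple.
by have := congr1 (drop m) e; rewrite !drop_size_cat ?size_tuple.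
Qed.

Lemma mu_mul m n x : (mu b m (0%R : Kpt R N) * mu b n x <= mu b (m + n) x)%N.
Proof.
rewrite !muE -cardsX.
pose g (QP : (m.-tuple bool * m.-tuple bool) * (n.-tuple bool * n.-tuple bool)) :=
  (cat_tuple QP.1.1 QP.2.1, cat_tuple QP.1.2 QP.2.2).
have ginj : injective g.
  move=> [[q1 q2] [p1 p2]] [[q1' q2'] [p1' p2']] [] /cat_tuple_inj [-> ->]
    /cat_tuple_inj [-> ->] //.
rewrite -(card_imset _ ginj); apply: subset_leq_card; apply/fintype.subsetP => y.
move=> /imsetP [[Q P]]; rewrite inE /= !inE => /andP [/eqP hQ /eqP hP] ->.
rewrite /g /= -hP; apply/eqP/ffunP => j.
have := dseq_cat Q P; rewrite /= => ->.
rewrite !digit_vecE ev_cat.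
have : digit_vec b (dseq Q) j = 0 by rewrite hQ ffunE.
by rewrite digit_vecE => ->; rewrite mul0r add0r.
Qed.

End Mu.
Local Open Scope classical_set_scope.
Section Lim.
Variables (R : realType) (N : nat) (b : 'I_N -> R[i]).

Lemma f_lower (lam : R) (f : Kpt R N -> R) n x : 0 < lam ->
  (fun n : nat => lam ^- n * (mu b n x)%:R) @ \oo --> f x ->
  (fun n : nat => lam ^- n * (mu b n 0)%:R) @ \oo --> f 0 ->
  lam ^- n * (mu b n x)%:R * f 0 <= f x.
Proof.
move=> lam0 hx h0.
have h1 : (fun m : nat => lam ^- (m + n) * (mu b (m + n) x)%:R) @ \oo --> f x.
  by rewrite (cvg_shiftn n (fun m : nat => lam ^- m * (mu b m x)%:R)).
have h2 : (fun m : nat => lam ^- n * (mu b n x)%:R * (lam ^- m * (mu b m 0)%:R))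
   @ \oo --> lam ^- n * (mu b n x)%:R * f 0.
  by apply: cvgM => //; exact: cvg_cst.
apply: (ler_cvg_to h2 h1); near=> m => /=.
rewrite exprD invfM.
have hm := mu_mul b m n x; rewrite -(ler_nat R) natrM in hm.
have a0 : 0 <= lam ^-1 ^+ m by rewrite exprn_ge0 // invr_ge0 ltW.
have a1 : 0 <= lam ^-1 ^+ n by rewrite exprn_ge0 // invr_ge0 ltW.
rewrite -!exprVn.
rewrite (_ : lam ^-1 ^+ n * (mu b n x)%:R * (lam ^-1 ^+ m * (mu b m 0)%:R) =
   lam ^-1 ^+ m * lam ^-1 ^+ n * ((mu b m 0)%:R * (mu b n x)%:R)); last by ring.
by rewrite ler_wpM2l // mulr_ge0.
Unshelve. all: by end_near.
Qed.

End Lim.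

Local Close Scope classical_set_scope.
Lemma card_ffam (N M : nat) (F : 'I_N -> pred 'I_M) :
  #|[pred f : {ffun 'I_N -> 'I_M} | [forall j, f j \in F j]]| = (\prod_(j < N) #|F j|)%N.
Proof.
have := card_family F. rewrite /image_mem foldrE big_map big_enum /= => <-.
by apply: eq_card => f; rewrite !inE.
Qed.
Lemma card_lt (M W : nat) : (#|[pred k : 'I_M | (k < W)%N]| <= W)%N.
Proof.
rewrite cardE -(size_map val) -[X in (_ <= X)%N](size_iota 0 W).
apply: uniq_leq_size; first by rewrite map_inj_uniq ?enum_uniq //; exact: val_inj.
by move=> x /mapP [k]; rewrite mem_enum inE => hk ->; rewrite mem_iota.
Qed.

Section Basic.
Variable R : realType.
Implicit Types z w : R[i].

Lemma ReB z w : complex.Re (z - w) = complex.Re z - complex.Re w.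
Proof. by case: z; case: w. Qed.
Lemma ImB z w : complex.Im (z - w) = complex.Im z - complex.Im w.
Proof. by case: z; case: w. Qed.
Lemma Re_conj z : complex.Re (z^*)%C = complex.Re z.
Proof. by case: z. Qed.
Lemma Im_conj z : complex.Im (z^*)%C = - complex.Im z.
Proof. by case: z. Qed.
Lemma conj_Im0 z : complex.Im z = 0 -> (z^*)%C = z.
Proof. by case: z => a c /= ->; rewrite oppr0. Qed.
Lemma Im_conj_self z : (z^*)%C = z -> complex.Im z = 0.
Proof.
case: z => a c [] /= /eqP; rewrite -subr_eq0 -opprD oppr_eq0 -mulr2n mulrn_eq0 /= => /eqP //.
Qed.

Lemma cabs_Im0 z : complex.Im z = 0 -> cabs z = `|complex.Re z|.
Proof. by move=> h; rewrite cabs_def h expr0n /= addr0 sqrtr_sqr. Qed.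

Lemma Ibound_pos z : 1 < cabs z -> 0 < Ibound z.
Proof.
move=> h; rewrite /Ibound; case: eqP => [h0|_].
  case: ifP => [h1|_]; first by rewrite invr_gt0 subr_gt0.
  by rewrite divr_gt0 // subr_gt0 -cabs_Im0.
by rewrite divr_gt0 // subr_gt0.
Qed.

Lemma Ibound_conj z : Ibound (z^*)%C = Ibound z.
Proof. by rewrite /Ibound Im_conj Re_conj cabs_conj oppr_eq0. Qed.

Lemma floor_close (x y : R) : Num.floor x = Num.floor y -> `|x - y| < 1.
Proof.
move=> e; have := floor_itv x; have := floor_itv y; rewrite e.
rewrite intrD /= => /andP [h1 h2] /andP [h3 h4].
rewrite ltr_norml; apply/andP; split; lra.
Qed.

Lemma cabs_evb n (a : n.-tuple bool) z :
  cabs (evb a z) <= \sum_(k < n) cabs z ^+ k.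
Proof.
rewrite /evb; apply: le_trans; first exact: cabs_sum.
rewrite [X in _ <= X](reindex_inj rev_ord_inj) /=.
apply: ler_sum => k _; rewrite cabsM cabsX.
have -> : ((nat_of_bool (tnth a k))%:R : R[i]) = (((nat_of_bool (tnth a k))%:R : R)%:C)%C.
  by rewrite rmorph_nat.
rewrite cabs_real ger0_norm //.
rewrite -[X in _ <= X]mul1r ler_wpM2r ?exprn_ge0 ?cabs_ge0 //.
by case: (tnth a k).
Qed.

Lemma evb_conj n (a : n.-tuple bool) z : evb a (z^*)%C = ((evb a z)^*)%C.
Proof.
rewrite /evb rmorph_sum; apply: eq_bigr => k _.
by rewrite rmorphM rmorphXn rmorph_nat.
Qed.

Lemma geom_bound (x : R) n : 1 < x -> \sum_(k < n) x ^+ k <= x ^+ n / (x - 1).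
Proof.
move=> x1; rewrite ler_pdivlMr ?subr_gt0 // mulrC -subrX1 lerBlDr lerDl //.
Qed.

End Basic.


Lemma div_aux (R : realType) (B X c e : R) : 0 < e -> 0 < c -> 0 <= B -> B <= X / c ->
  B / e <= X / (e * c).
Proof.
move=> e0 c0 B0 h.
have -> : X / (e * c) = (X / c) * e^-1 by rewrite invfM mulrA mulrAC.
by apply: ler_pM => //; rewrite invr_ge0 ltW.
Qed.

Section Cells.
Variables (R : realType) (N : nat) (b : 'I_N -> R[i]) (d n : nat).
Hypothesis hexp : forall j : 'I_N, (j < d)%N -> 1 < cabs (b j).
Hypothesis hconj : forall j : 'I_N, (j < d)%N ->
  exists2 j' : 'I_N, (j' < d)%N & b j' = ((b j)^*)%C.

Definition del (j : 'I_N) : R := Ibound (b j) / 2.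
Definition gj (j : 'I_N) (z : R[i]) : R :=
  if 0 <= complex.Im (b j) then complex.Re z else complex.Im z.
Definition Bn (j : 'I_N) : R := \sum_(k < n) cabs (b j) ^+ k.
Definition Lc (j : 'I_N) : int := Num.floor (Bn j / del j) + 1.
Definition cc (j : 'I_N) (a : n.-tuple bool) : int :=
  Num.floor (gj j (evb a (b j)) / del j) + Lc j.
Definition Wc (j : 'I_N) : nat := absz (Lc j * 2).
Definition Wm : nat := (\sum_(j < N) Wc j)%N.
Definition cell (a : n.-tuple bool) : {ffun 'I_N -> 'I_Wm.+1} :=
  [ffun j : 'I_N => if (j < d)%N then inord (absz (cc j a)) else ord0].

Lemma del_gt0 (j : 'I_N) : (j < d)%N -> 0 < del j.
Proof. by move=> hj; rewrite divr_gt0 // Ibound_pos // hexp. Qed.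

Lemma gj_bound (j : 'I_N) z : `|gj j z| <= cabs z.
Proof. by rewrite /gj; case: ifP => _; [exact: cabs_Re | exact: cabs_Im]. Qed.

Lemma gjB (j : 'I_N) z w : gj j (z - w) = gj j z - gj j w.
Proof. by rewrite /gj; case: ifP => _; [exact: ReB | exact: ImB]. Qed.

Lemma Bn_ge0 (j : 'I_N) : 0 <= Bn j.
Proof. by apply: sumr_ge0 => k _; rewrite exprn_ge0 // cabs_ge0. Qed.

Lemma Lc_ge1 (j : 'I_N) : (j < d)%N -> 1 <= Lc j.
Proof.
move=> hj; rewrite /Lc lerDr floor_ge0 divr_ge0 ?Bn_ge0 //.
by rewrite ltW // del_gt0.
Qed.

Lemma cc_range (j : 'I_N) a : (j < d)%N -> 0 <= cc j a < Lc j * 2.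
Proof.
move=> hj; have d0 := del_gt0 hj.
set t := gj j (evb a (b j)) / del j.
have ht : `|t| <= Bn j / del j.
  have hg : `|gj j (evb a (b j))| <= Bn j.
    exact: le_trans (gj_bound _ _) (cabs_evb _ _).
  rewrite /t normrM normfV (gtr0_norm d0).
  apply: ler_pM => //; rewrite ?invr_ge0 ?ltW //.
move: ht; rewrite ler_norml => /andP [h1 h2].
have f1 : Num.floor t <= Num.floor (Bn j / del j) by exact: le_floor.
have f2 : - Lc j <= Num.floor t.
  have hf := floorD1_gt (Bn j / del j).
  rewrite floor_ge_int /Lc rmorphN /=; lra.
rewrite /cc -/t /Lc in f2 *; apply/andP; split; first lia.
lia.
Qed.

Lemma Wc_le (j : 'I_N) : (Wc j <= Wm)%N.
Proof. by rewrite /Wm (bigD1 j) //= leq_addr. Qed.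

Lemma abs_cc (j : 'I_N) a : (j < d)%N -> (`|cc j a| < Wc j)%N.
Proof.
move=> hj; have /andP [h1 h2] := cc_range a hj.
have h3 : 0 <= Lc j * 2 by have := Lc_ge1 hj; lia.
by rewrite /Wc -ltz_nat !abszE !ger0_norm.
Qed.

Lemma cell_small (a a' : n.-tuple bool) (j : 'I_N) : cell a = cell a' -> (j < d)%N ->
  `|gj j (evb a (b j) - evb a' (b j))| < del j.
Proof.
move=> e hj; have := congr1 (fun f : {ffun 'I_N -> 'I_Wm.+1} => val (f j)) e; rewrite /= !ffunE hj.
have l1 := leq_trans (abs_cc a hj) (Wc_le j).
have l2 := leq_trans (abs_cc a' hj) (Wc_le j).
rewrite !inordK ?(ltnW l1) ?(ltnW l2) ?ltnS ?(ltnW l1) ?(ltnW l2) //.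
have /andP [c1 _] := cc_range a hj; have /andP [c2 _] := cc_range a' hj.
move=> /(congr1 (fun k : nat => k%:Z)) h; rewrite !abszE !ger0_norm // in h.
move: h; rewrite /cc => /addIr /floor_close.
have d0 := del_gt0 hj.
rewrite -mulrBl normrM normfV (gtr0_norm d0) -gjB.
by rewrite ltr_pdivrMr // mul1r.
Qed.

Lemma inS_cell (a a' : n.-tuple bool) : cell a = cell a' ->
  inS b d (digit_vec b (dseq (a, a'))).
Proof.
move=> e j hj; rewrite digit_vecE ev_dseq /=.
pose D (j : 'I_N) := evb a (b j) - evb a' (b j).
have pc : forall j j' : 'I_N, b j' = ((b j)^*)%C -> D j' = ((D j)^*)%C.
  by move=> i i' ei; rewrite /D ei !evb_conj rmorphB.
have dc : forall j j' : 'I_N, b j' = ((b j)^*)%C -> del j' = del j.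
  by move=> i i' ei; rewrite /del ei Ibound_conj.
have key : `|complex.Re (D j)| < del j /\ `|complex.Im (D j)| < del j.
  have [j' hj' ej'] := hconj hj.
  have s1 : `|gj j (D j)| < del j by exact: cell_small.
  have s2 : `|gj j' (D j')| < del j' by exact: cell_small.
  have hI : complex.Im (b j') = - complex.Im (b j) by rewrite ej'; case: (b j).
  have hD := pc _ _ ej'.
  have hR2 : complex.Re (D j') = complex.Re (D j) by rewrite hD; case: (D j).
  have hI2 : complex.Im (D j') = - complex.Im (D j) by rewrite hD; case: (D j).
  rewrite /gj hI hR2 hI2 (dc _ _ ej') oppr_ge0 in s2.
  rewrite /gj in s1.
  case: (ltrgt0P (complex.Im (b j))) => h.
  - rewrite ltW // in s1; rewrite leNgt h /= normrN in s2; by split.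
  - rewrite leNgt h /= in s1; rewrite ltW // in s2; by split.
  - rewrite h lexx in s1; split => //.
    have : D j = ((D j)^*)%C by apply: pc; rewrite conj_Im0.
    by move/esym/Im_conj_self => ->; rewrite normr0 del_gt0.
case: key => k1 k2.
apply: le_trans (cabs_ReIm _) _.
rewrite -/(D j); apply: ltW; apply: (lt_le_trans (ltrD k1 k2)).
by rewrite /del -splitr.
Qed.

Lemma count_good :
  ((2 ^ n) ^ 2 <= (\prod_(j < N | (j < d)%N) Wc j) *
    #|[set P : n.-tuple bool * n.-tuple bool | `[< inS b d (digit_vec b (dseq P)) >] ]%SET|)%N.
Proof.
pose F (j : 'I_N) : pred 'I_Wm.+1 :=
  if (j < d)%N then [pred k : 'I_Wm.+1 | (k < Wc j)%N] else pred1 ord0.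
pose A := [pred f : {ffun 'I_N -> 'I_Wm.+1} | [forall j, f j \in F j]].
have hA : forall a, cell a \in A.
  move=> a; rewrite inE; apply/forallP => j; rewrite /cell ffunE /F.
  case: ifP => hj; rewrite inE //=.
  have l1 := abs_cc a hj; have l2 := Wc_le j.
  by rewrite inordK // ltnS (leq_trans (ltnW l1) l2).
have cs := cs_count hA.
rewrite card_tuple card_bool in cs.
apply: (leq_trans cs); apply: leq_mul.
  rewrite card_ffam [X in (_ <= X)%N]big_mkcond /=; apply: leq_prod => j _.
  rewrite /F; case: ifP => _; first exact: card_lt.
  by rewrite card1.
apply: subset_leq_card; apply/fintype.subsetP => -[p1 p2]; rewrite !inE /= => /eqP e.
exact (inS_cell e).
Qed.

Lemma Wc_bound (j : 'I_N) : (j < d)%N ->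
  (Wc j)%:R <= (2 / (del j * (cabs (b j) - 1)) + 2) * cabs (b j) ^+ n.
Proof.
move=> hj; have d0 := del_gt0 hj; have b1 := hexp hj.
have L1 := Lc_ge1 hj.
have -> : (Wc j)%:R = (Lc j * 2)%:~R :> R.
  by rewrite /Wc natr_absz ger0_norm //; lia.
rewrite intrM /Lc intrD /=.
set X := cabs (b j) ^+ n.
have X1 : 1 <= X by rewrite /X exprn_ege1 // ltW.
have h1 := floor_le (Bn j / del j).
have hB : Bn j <= X / (cabs (b j) - 1) by exact: geom_bound.
have h2 : Bn j / del j <= X / (del j * (cabs (b j) - 1)).
  by apply: div_aux => //; [rewrite subr_gt0 | exact: Bn_ge0].
set u := del j * (cabs (b j) - 1) in h2 *.
have u0 : 0 < u by rewrite /u mulr_gt0 // subr_gt0.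
have -> : (2 / u + 2) * X = 2 * (X / u) + 2 * X by field; rewrite gt_eqF.
lra.
Qed.

End Cells.

Lemma card_set_sum (T : finType) (Q : pred T) :
  #|[set P | Q P]%SET| = (\sum_P nat_of_bool (Q P))%N.
Proof.
rewrite -sum1_card big_mkcond /=; apply: eq_bigr => P _; rewrite inE.
by case: (Q P).
Qed.

Lemma sum_fibers (T : finType) (K : eqType) (g : T -> K) (G : pred T) :
  (forall P P', G P -> g P = g P' -> G P') ->
  (\sum_(x <- undup [seq g P | P <- enum G]) #|[set P | g P == x]%SET|)%N = #|G|.
Proof.
move=> hG; set U := undup _.
under eq_bigr => x _ do rewrite card_set_sum.
rewrite exchange_big /=.
rewrite -[RHS]sum1_card [RHS]big_mkcond /=; apply: eq_bigr => P _.
have -> : (\sum_(i <- U) nat_of_bool (g P == i))%N = count_mem (g P) U.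
  rewrite -sum1_count [RHS]big_mkcond /=; apply: eq_bigr => i _.
  by rewrite eq_sym; case: (g P == i).
rewrite count_uniq_mem ?undup_uniq // mem_undup.
case: (boolP (P \in G)) => hP.
  by rewrite (map_f g) // mem_enum.
case: (boolP (g P \in _)) => //= /mapP [P' hP' e].
by rewrite mem_enum in hP'; case/negP: hP; exact: (hG _ _ hP' (esym e)).
Qed.

Local Open Scope classical_set_scope.
Lemma esum_ge_seq (R : realType) (T : choiceType) (D : set T) (U : seq T) (h : T -> R) :
  uniq U -> (forall x, x \in U -> D x) ->
  ((\sum_(x <- U) h x)%:E <= \esum_(x in D) (h x)%:E)%E.
Proof.
move=> uU UD; apply: esum_ge; exists [set` U].
  by split; [exact: finite_seq | move=> x /= /UD].
by rewrite -fsbig_seq // sumEFin.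
Qed.

Lemma partner (R : realType) (d s : nat) (b : 'I_(d + s).+1 -> R[i]) (p : {poly rat}) :
  (forall z : R[i], root (map_poly ratr p) z <-> exists j, b j = z) ->
  injective b ->
  (forall j : 'I_(d + s).+1, (d <= j < d + s)%N -> cabs (b j) < 1) ->
  complex.Im (b ord_max) = 0 ->
  (forall j : 'I_(d + s).+1, (j < d)%N -> 1 < cabs (b j)) ->
  forall j : 'I_(d + s).+1, (j < d)%N ->
    exists2 j' : 'I_(d + s).+1, (j' < d)%N & b j' = ((b j)^*)%C.
Proof.
move=> hroot binj hcon hIm hexp j hj.
have r1 : root (map_poly ratr p) (b j) by apply/hroot; exists j.
have r2 : root (map_poly ratr p) ((b j)^*)%C.
  rewrite -complex_root_conj -map_poly_comp.
  rewrite (eq_map_poly (g := ratr)) // => a /=.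
  exact: fmorph_rat.
have [j' ej'] := (hroot _).1 r2.
exists j' => //.
have c1 : cabs (b j') = cabs (b j) by rewrite ej' cabs_conj.
case: (ltnP j' d) => // hd.
have bj1 := hexp j hj.
case: (ltnP j' (d + s)) => h2.
  have := hcon j' (introT andP (conj hd h2)); rewrite c1 => h3.
  by have := lt_trans bj1 h3; rewrite ltxx.
have ejm : j' = ord_max by apply: val_inj => /=; have := ltn_ord j'; lia.
have : b j = b ord_max.
  by rewrite -[b j]conjcK -ej' ejm conj_Im0.
move/binj => ej; have := ltn_ord j; rewrite ej /= in hj; lia.
Qed.


Unset Implicit Arguments.
Local Open Scope classical_set_scope.
Local Open Scope ring_scope.

Theorem lemma4p2 (R : realType) (beta : R) (d s : nat)
  (b : 'I_(d + s).+1 -> R[i]) (p : {poly rat}) (lam : R)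
  (f : Kpt R (d + s).+1 -> R) :
  1 < beta < 2 ->
  (exists q : {poly int}, q \is monic /\ root (map_poly intr q) (beta%:C)%C) ->
  p \is monic -> irreducible_poly p -> root (map_poly ratr p) (beta%:C)%C ->
  (forall z : R[i], root (map_poly ratr p) z <-> exists j, b j = z) ->
  injective b ->
  b ord0 = (beta%:C)%C ->
  (forall j, cabs (b j) != 1) ->
  (0 < d)%N ->
  (forall j : 'I_(d + s).+1, (j < d)%N -> 1 < cabs (b j)) ->
  (forall j : 'I_(d + s).+1, (d <= j < d + s)%N -> cabs (b j) < 1) ->
  complex.Im (b ord_max) = 0 -> 1 < cabs (b ord_max) ->
  1 < lam ->
  (forall x, inX b d x ->
     0 < f x <= f 0 /\
     (fun n : nat => lam ^- n * (mu b n x)%:R) @ \oo --> f x) ->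
  lam < 4 / cabs (\prod_(j < (d + s).+1 | (j < d)%N) b j) ->
  exists c rho : R, 0 < c /\ 1 < rho /\
    forall n : nat,
      ((c * rho ^+ n)%:E <= \esum_(x in Rset b d ord_max n) (f x)%:E)%E.
Proof.
move=> _ _ _ _ _ hroot binj _ _ _ hexp hcon hIm _ lam1 hf hlam.
have hconj := partner hroot binj hcon hIm hexp.
have lam0 : 0 < lam by apply: lt_trans lam1.
have X0 : inX b d 0.
  split.
    exists [::]; split => //; apply/(@ffunP _ (fun _ => R[i])) => j; rewrite digit_vecE ev_nil ffunE.
    by [].
  move=> j hj; rewrite ffunE (_ : 0 = (0%:~R : R[i])) // cabs_int normr0 /=.
  by apply: ltW; apply: Ibound_pos; apply: hexp.
have [/andP [f0 _] cv0] := hf 0 X0.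
pose K := \prod_(j < (d + s).+1 | (j < d)%N) cabs (b j).
pose C := \prod_(j < (d + s).+1 | (j < d)%N) (2 / (del b j * (cabs (b j) - 1)) + 2).
have K0 : 0 < K by apply: prodr_gt0 => j hj; apply: lt_trans (hexp j hj).
have Cj0 : forall j : 'I_(d + s).+1, (j < d)%N -> 0 < 2 / (del b j * (cabs (b j) - 1)) + 2.
  move=> j hj; apply: addr_gt0 => //; apply: divr_gt0 => //.
  by apply: mulr_gt0; [exact: (del_gt0 hexp hj) | rewrite subr_gt0 hexp].
have C0 : 0 < C by apply: prodr_gt0.
rewrite cabs_prod -/K in hlam.
have lK : lam * K < 4 by rewrite -ltr_pdivlMr.
exists (f 0 / C), (4 / (lam * K)); split; first by rewrite divr_gt0.
split; first by rewrite ltr_pdivlMr ?mul1r // mulr_gt0.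
move=> n.
pose G := [set P : n.-tuple bool * n.-tuple bool |
  `[< inS b d (digit_vec b (dseq P)) >] ]%SET.
have cg := count_good n hexp hconj; rewrite -/G in cg.
have hW : ((\prod_(j < (d + s).+1 | (j < d)%N) Wc b n j)%:R : R) <= C * K ^+ n.
  rewrite natr_prod /C /K -prodrXl -big_split /=.
  apply: ler_prod => j hj; rewrite ler0n /=; exact: (Wc_bound n hexp hj).
have hG : 4 ^+ n <= C * K ^+ n * (#|G|)%:R.
  have e4 : ((2 ^ n) ^ 2)%N = (4 ^ n)%N by rewrite -expnM mulnC expnM.
  move: cg; rewrite e4 -(ler_nat R) natrM natrX => h.
  apply: le_trans h _; apply: ler_wpM2r => //.
pose U := undup [seq digit_vec b (dseq P) | P <- enum G].
have UR : forall x, x \in U -> Rset b d ord_max n x.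
  move=> x; rewrite mem_undup => /mapP [P hP ->]; rewrite mem_enum inE in hP.
  split.
    split; first by exists (dseq P); split => //; exact: dseq_all.
    exact/asboolP.
  rewrite digit_vecE; apply: le_trans (cabs_ev _ (dseq_all1 P)) _.
  by rewrite size_dseq.
have UX : forall x, x \in U -> inX b d x by move=> x /UR [].
apply: le_trans (esum_ge_seq _ (undup_uniq _) UR).
rewrite lee_fin.
have hS : lam ^- n * f 0 * (#|G|)%:R <= \sum_(x <- U) f x.
  have -> : #|G| = (\sum_(x <- U) mu b n x)%N.
    rewrite /U -(sum_fibers (g := fun P => digit_vec b (dseq P))).
      by apply: eq_bigr => x _; rewrite muE.
    move=> P P' hP e; have hP2 : P \in G := hP; suff : P' \in G by []; move: hP2; rewrite !inE => /asboolP hP2; apply/asboolP; by rewrite -e.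
  rewrite natr_sum mulr_sumr !big_seq; apply: ler_sum => x hx.
  have [_ cvx] := hf x (UX x hx).
  have := f_lower n lam0 cvx cv0.
  by rewrite mulrAC.
apply: le_trans hS.
have lamn : 0 < lam ^+ n by rewrite exprn_gt0.
have Kn : 0 < K ^+ n by rewrite exprn_gt0.
rewrite expr_div_n exprMn.
have -> : f 0 / C * (4 ^+ n / (lam ^+ n * K ^+ n)) =
    lam ^- n * f 0 * (4 ^+ n / (C * K ^+ n)).
  by field; rewrite !gt_eqF.
apply: ler_wpM2l; first by rewrite mulr_ge0 // ?invr_ge0 ?exprn_ge0 ?ltW.
by rewrite ler_pdivrMr ?mulr_gt0 // mulrC.
Qed.
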